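(* Let $L\subseteq Q$ be a dense extension of symmetric Leibniz algebras, and suppose $Q$ is a multiplicatively prime algebra of quotients of $L$. Then $I\subseteq Q$ is a dense extension for every nonzero ideal $I$ of $L$.
   Context: A symmetric Leibniz algebra satisfies both $[x,[y,z]]=[[x,y],z]-[[x,z],y]$ and $[x,[y,z]]=[[x,y],z]+[y,[x,z]]$. For $x\in Q$, $R_x(u)=[u,x]$, $L_x(u)=[x,u]$; $M(Q)$ is the associative subalgebra of $\mathrm{End}(Q)$ generated by the identity and all $R_x,L_x$. A subalgebra $K$ of $Q$ is dense ($K\subseteq Q$ is a dense extension) if the only $\mu\in M(Q)$ with $\mu(K)=\{0\}$ is $\mu=0$. A Leibniz algebra is prime if $[I,J]\ne\{0\}$ for all nonzero ideals $I,J$; an associative algebra is prime if the product of any two nonzero two-sided ideals is nonzero. $Q$ is multiplicatively prime if $Q$ and $M(Q)$ are prime. With $\mathscr{A}_Q(L)$ the associative algebra generated by $R_x,L_y$ ($x,y\in L$), ${}_L(q)=\mathbb{F}q+\{\sum\xi_i(q):\xi_i\in\mathscr{A}_Q(L)\}$, $(L:q)=\{x\in L:[x,{}_L(q)]\subseteq L,[{}_L(q),x]\subseteq L\}$; $Q$ is an algebra of quotients of $L$ if for all $p,q\in Q$, $p\ne0$, there is $x\in(L:q)$ with $[x,p]\ne0$ or $y\in(L:q)$ with $[p,y]\ne0$. *)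

(* Defs.v *)
From HB Require Import structures.
From mathcomp Require Import all_boot all_order all_algebra.
Set Implicit Arguments. Unset Strict Implicit. Unset Printing Implicit Defensive.
Import GRing.Theory.
Local Open Scope ring_scope.

Section LeibnizDefs.
Variables (F : fieldType) (Q : lmodType F) (br : Q -> Q -> Q).

Definition bilinear_br : Prop :=
  (forall (a : F) (x y z : Q), br (a *: x + y) z = a *: br x z + br y z) /\
  (forall (a : F) (x y z : Q), br z (a *: x + y) = a *: br z x + br z y).

Definition sym_leibniz : Prop :=
  bilinear_br /\
  (forall x y z, br x (br y z) = br (br x y) z - br (br x z) y) /\
  (forall x y z, br x (br y z) = br (br x y) z + br y (br x z)).

Definition Rop (x : Q) : Q -> Q := fun u => br u x.
Definition Lop (x : Q) : Q -> Q := fun u => br x u.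

Definition subspace (S : Q -> Prop) : Prop :=
  S 0 /\ forall (a : F) x y, S x -> S y -> S (a *: x + y).

Definition subalgebra (S : Q -> Prop) : Prop :=
  subspace S /\ forall x y, S x -> S y -> S (br x y).

Definition ideal_of (L I : Q -> Prop) : Prop :=
  subspace I /\ (forall x, I x -> L x) /\
  (forall x y, I x -> L y -> I (br x y)) /\
  (forall x y, I x -> L y -> I (br y x)).

Definition nonzero_set (S : Q -> Prop) : Prop := exists x, S x /\ x <> 0.

Inductive inMQ : (Q -> Q) -> Prop :=
  | MQ_id : inMQ id
  | MQ_R x : inMQ (Rop x)
  | MQ_L x : inMQ (Lop x)
  | MQ_zero : inMQ (fun _ => 0)
  | MQ_add f g : inMQ f -> inMQ g -> inMQ (fun u => f u + g u)
  | MQ_scale (a : F) f : inMQ f -> inMQ (fun u => a *: f u)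
  | MQ_comp f g : inMQ f -> inMQ g -> inMQ (fun u => f (g u)).

Inductive inAQ (L : Q -> Prop) : (Q -> Q) -> Prop :=
  | AQ_R x : L x -> inAQ L (Rop x)
  | AQ_L x : L x -> inAQ L (Lop x)
  | AQ_add f g : inAQ L f -> inAQ L g -> inAQ L (fun u => f u + g u)
  | AQ_scale (a : F) f : inAQ L f -> inAQ L (fun u => a *: f u)
  | AQ_comp f g : inAQ L f -> inAQ L g -> inAQ L (fun u => f (g u)).

Definition zero_map (f : Q -> Q) : Prop := forall u, f u = 0.

Definition dense (K : Q -> Prop) : Prop :=
  forall mu, inMQ mu -> (forall k, K k -> mu k = 0) -> zero_map mu.

Definition ideal_Q (I : Q -> Prop) : Prop :=
  subspace I /\ (forall x y, I x -> I (br x y)) /\ (forall x y, I x -> I (br y x)).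

Definition prime_leibniz : Prop :=
  forall I J, ideal_Q I -> ideal_Q J -> nonzero_set I -> nonzero_set J ->
    exists x y, I x /\ J y /\ br x y <> 0.

Definition ideal_MQ (A : (Q -> Q) -> Prop) : Prop :=
  (forall f, A f -> inMQ f) /\ A (fun _ => 0) /\
  (forall (a : F) f g, A f -> A g -> A (fun u => a *: f u + g u)) /\
  (forall f g, inMQ f -> A g -> A (fun u => f (g u))) /\
  (forall f g, A f -> inMQ g -> A (fun u => f (g u))).

Definition nonzero_ideal_MQ (A : (Q -> Q) -> Prop) : Prop :=
  exists f, A f /\ ~ zero_map f.

(* the product ideal AB (spanned by the products ab) is nonzero *)
Definition prime_MQ : Prop :=
  forall A B, ideal_MQ A -> ideal_MQ B -> nonzero_ideal_MQ A -> nonzero_ideal_MQ B ->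
    exists f g, A f /\ B g /\ ~ zero_map (fun u => f (g u)).

Definition mult_prime : Prop := prime_leibniz /\ prime_MQ.

Definition Lq (L : Q -> Prop) (q : Q) (v : Q) : Prop :=
  exists (a : F) xi, inAQ L xi /\ v = a *: q + xi q.

Definition Lcolon (L : Q -> Prop) (q : Q) (x : Q) : Prop :=
  L x /\ (forall v, Lq L q v -> L (br x v)) /\ (forall v, Lq L q v -> L (br v x)).

Definition algebra_of_quotients (L : Q -> Prop) : Prop :=
  forall p q, p <> 0 ->
    (exists x, Lcolon L q x /\ br x p <> 0) \/ (exists y, Lcolon L q y /\ br p y <> 0).

End LeibnizDefs.

(* Main.v *)
Require Import Defs.
From mathcomp Require Import all_boot all_order all_algebra.
Set Implicit Arguments. Unset Strict Implicit. Unset Printing Implicit Defensive.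
Import GRing.Theory.
Local Open Scope ring_scope.

Section Aux.
Variables (F : fieldType) (Q : lmodType F) (br : Q -> Q -> Q).
Hypothesis hbil : bilinear_br br.

Lemma MQ_lin f0 : inMQ br f0 -> forall (a : F) x y, f0 (a *: x + y) = a *: f0 x + f0 y.
Proof.
case: hbil => hl hr.
elim=> /=.
- by [].
- move=> x a u v; exact: hl.
- move=> x a u v; exact: hr.
- by move=> a u v; rewrite scaler0 addr0.
- move=> f g _ IHf _ IHg a u v; rewrite IHf IHg scalerDr.
  by rewrite -!addrA; congr (_ + _); rewrite addrCA.
- move=> b f _ IH a u v; rewrite IH scalerDr !scalerA mulrC //.
- move=> f g _ IHf _ IHg a u v; by rewrite IHg IHf.
Qed.

Lemma MQ_add' f : inMQ br f -> forall x y, f (x + y) = f x + f y.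
Proof. by move=> hf x y; rewrite -{1}(scale1r x) MQ_lin // scale1r. Qed.

Lemma MQ_0 f : inMQ br f -> f 0 = 0.
Proof.
move=> hf; have h := MQ_add' hf 0 0; rewrite addr0 in h.
by apply: (addrI (f 0)); rewrite addr0 -h.
Qed.

Lemma MQ_scale' f : inMQ br f -> forall a x, f (a *: x) = a *: f x.
Proof. by move=> hf a x; rewrite -(addr0 (a *: x)) MQ_lin // MQ_0 // addr0. Qed.

Lemma idealQ_closed K : ideal_Q br K -> forall g0, inMQ br g0 -> forall k, K k -> K (g0 k).
Proof.
case=> [[K0 KS] [K1 K2]] g0; elim=> //=.
- by move=> x k Kk; apply: K1.
- by move=> x k Kk; apply: K2.
- move=> f h _ IHf _ IHh k Kk; rewrite -(scale1r (f k)); exact: KS (IHf _ Kk) (IHh _ Kk).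
- move=> a f _ IH k Kk; rewrite -(addr0 (a *: f k)); exact: KS (IH _ Kk) K0.
- move=> f h _ IHf _ IHh k Kk; exact: IHf (IHh _ Kk).
Qed.

Lemma ideal_dense K : prime_MQ br -> prime_leibniz br -> ideal_Q br K ->
  nonzero_set K -> dense br K.
Proof.
move=> pM pL hK [x0 [Kx0 x0n0]] mu hmu hkill u.
case: (eqVneq (mu u) 0) => // mun0; exfalso.
have hK' := hK; case: hK' => [[K0 KS] [K1 K2]].
pose A := fun f => inMQ br f /\ forall k, K k -> f k = 0.
pose B := fun h => inMQ br h /\ forall q, K (h q).
have iA : ideal_MQ br A.
  split; first by move=> f [].
  split; first by split; [exact: MQ_zero | by []].
  split.
    move=> a f g [hf kf] [hg kg]; split; first exact: MQ_add (MQ_scale a hf) hg.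
    by move=> k Kk; rewrite kf // kg // scaler0 addr0.
  split.
    move=> f g hf [hg kg]; split; first exact: MQ_comp.
    by move=> k Kk; rewrite kg // MQ_0.
  move=> f g [hf kf] hg; split; first exact: MQ_comp.
  by move=> k Kk; apply: kf; apply: idealQ_closed hK _ hg _ Kk.
have iB : ideal_MQ br B.
  split; first by move=> f [].
  split; first by split; [exact: MQ_zero | by []].
  split.
    move=> a f g [hf kf] [hg kg]; split; first exact: MQ_add (MQ_scale a hf) hg.
    by move=> q; apply: KS.
  split.
    move=> f g hf [hg kg]; split; first exact: MQ_comp.
    by move=> q; apply: idealQ_closed hK _ hf _ (kg q).
  move=> f g [hf kf] hg; split; first exact: MQ_comp.
  by move=> q; apply: kf.
have nA : nonzero_ideal_MQ A.
  by exists mu; split; [split | move=> /(_ u) /eqP; rewrite (negbTE mun0)].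
have nB : nonzero_ideal_MQ B.
  have hT : ideal_Q br (fun _ => True) by [].
  have [x [y [Kx [_ nxy]]]] := pL K (fun _ => True) hK hT (ex_intro _ x0 (conj Kx0 x0n0))
     (ex_intro _ x0 (conj I x0n0)).
  exists (Lop br x); split; first by split; [exact: MQ_L | move=> q; exact: K1].
  by move=> /(_ y).
have [f [g [[hf kf] [[hg kg] nfg]]]] := pM A B iA iB nA nB.
by apply: nfg => v; apply: kf.
Qed.

End Aux.

Theorem corollary6p6 (F : fieldType) (Q : lmodType F) (br : Q -> Q -> Q)
  (L : Q -> Prop) :
  sym_leibniz br ->
  subalgebra br L ->
  dense br L ->
  mult_prime br ->
  algebra_of_quotients br L ->
  forall I : Q -> Prop, ideal_of br L I -> nonzero_set I -> dense br I.
Proof.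
move=> [hbil _] _ dL [pL pM] _ I [_ [_ [I1 I2]]] nI mu hmu hkill.
have sub : forall g, inMQ br g -> (forall i, I i -> mu (g i) = 0) ->
    forall i, I i -> forall q, mu (g (br q i)) = 0 /\ mu (g (br i q)) = 0.
  move=> g hg kg i Ii q; split.
    have := dL (fun u => mu (g (Rop br i u))) (MQ_comp hmu (MQ_comp hg (MQ_R br i))).
    move=> H; apply: H => l Ll; apply: kg; exact: I2.
  have := dL (fun u => mu (g (Lop br i u))) (MQ_comp hmu (MQ_comp hg (MQ_L br i))).
  move=> H; apply: H => l Ll; apply: kg; exact: I1.
have step : forall h, inMQ br h -> forall g, inMQ br g ->
    (forall i, I i -> mu (g i) = 0) -> forall i, I i -> mu (g (h i)) = 0.
  move=> h; elim=> /=.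
  - by move=> g hg kg i Ii; apply: kg.
  - by move=> x g hg kg i Ii; case: (sub g hg kg i Ii x).
  - by move=> x g hg kg i Ii; case: (sub g hg kg i Ii x).
  - by move=> g hg kg i Ii; rewrite !(MQ_0 hbil).
  - move=> f1 f2 h1 IH1 h2 IH2 g hg kg i Ii.
    by rewrite (MQ_add' hbil) // (MQ_add' hbil) // IH1 // IH2 // addr0.
  - move=> a f1 h1 IH1 g hg kg i Ii.
    by rewrite (MQ_scale' hbil) // (MQ_scale' hbil) // IH1 // scaler0.
  - move=> f1 f2 h1 IH1 h2 IH2 g hg kg i Ii.
    apply: (IH2 (fun u => g (f1 u))) => //; first exact: MQ_comp.
    by move=> j Ij; apply: IH1.
pose K := fun q => forall h, inMQ br h -> mu (h q) = 0.
have hK : ideal_Q br K.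
  split; [split|split].
  - move=> h hh; rewrite (MQ_0 hbil hh); exact: (MQ_0 hbil hmu).
  - by move=> a x y Kx Ky h hh; rewrite (MQ_lin hbil) // (MQ_lin hbil) // Kx // Ky // scaler0 addr0.
  - move=> x y Kx h hh; exact: (Kx (fun u => h (Rop br y u)) (MQ_comp hh (MQ_R br y))).
  - move=> x y Kx h hh; exact: (Kx (fun u => h (Lop br y u)) (MQ_comp hh (MQ_L br y))).
have nK : nonzero_set K.
  case: nI => x [Ix xn0]; exists x; split => // h hh.
  exact: (step h hh id (MQ_id br) hkill x Ix).
apply: (ideal_dense hbil pM pL hK nK hmu).
by move=> k Kk; apply: (Kk id (MQ_id br)).
Qed.
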